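(* Assume the distribution $\mathcal D_2(\lambda)$ defined in the context. For any $\Pi\subseteq\mathbf X_1$ and any $Y\in\mathbf X_1$, \[|H(X_b\mid\Pi)-H(X_a\mid\Pi)|\le\lambda,\qquad |H(Y\mid\Pi,X_b)-H(Y\mid\Pi,X_a)|\le3\lambda.\]
   Context: Entropies use the natural logarithm; $k$ is a fixed positive integer. Scores: for a DAG (identified with its set of families $\langle Y,\Pi\rangle$, $|\Pi|\le k$) the score is $-\sum H(Y\mid\Pi)$ over its families; Markov-equivalent DAGs form equivalence classes (ECs) with a common score. Construction. $\mathcal D_1$ is a distribution over a finite set $\mathbf X_1$ of at least $k$ discrete variables, containing a variable $X_a$, such that for some $\alpha,\beta>0$: (I) among DAGs over $\mathbf X_1$ with in-degree $\le k$ there is a unique optimal EC, with score gap at least $\beta$ to the next-best EC; (II) $X_a$ has no children in any structure of the optimal EC; (III) $H(X_a\mid\mathbf X_1\setminus\{X_a\})=\alpha$. Let $\mathbf X=\mathbf X_1\cup\{X_b\}$, $d=|\mathbf X|$. For $\lambda\in(0,\min(\alpha,\beta/(3d)))$, $\mathcal D_2(\lambda)$ is a distribution on $\mathbf X$ with marginal $\mathcal D_1$ on $\mathbf X_1$ such that: (IV) there is a hidden Bernoulli variable $C$ independent of $\mathbf X_1$ with $P[X_b=X_a\mid C=1]=1$ and $X_b$ independent of $\mathbf X_1$ given $C=0$; (V) $\max(H(X_b\mid X_a),H(X_a\mid X_b))=\lambda$. *)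

(* Defs.v *)
From HB Require Import structures.
From mathcomp Require Import all_boot all_order all_algebra.
From mathcomp Require Import all_classical all_reals all_analysis.
Set Implicit Arguments. Unset Strict Implicit. Unset Printing Implicit Defensive.
Import Order.TTheory GRing.Theory Num.Theory.
Local Open Scope ring_scope.

Section Info.
Variables (R : realType) (Omega : finType) (p : Omega -> R).

Definition prob (E : pred Omega) : R := \sum_(w | E w) p w.

(* Shannon entropy (natural log) of a discrete random variable Z : Omega -> U,
   H(Z) = - sum_z P[Z=z] ln P[Z=z] = - sum_w p w ln P[Z = Z w]. *)
Definition ent (U : eqType) (Z : Omega -> U) : R :=
  - \sum_w p w * ln (prob (fun w' => Z w' == Z w)).

Definition pairRV (U V : eqType) (Y : Omega -> U) (Z : Omega -> V) :
  Omega -> U * V := fun w => (Y w, Z w).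

Definition cent (U V : eqType) (Y : Omega -> U) (Z : Omega -> V) : R :=
  ent (pairRV Y Z) - ent Z.

Definition jointRV (I : finType) (T : eqType) (X : I -> Omega -> T)
  (S : {set I}) : Omega -> seq T :=
  fun w => [seq X i w | i <- enum S].

End Info.

Section DAG.
Variable I : finType.
(* A directed graph over I given by its families: G y = parent set of y. *)
Definition edge (G : {ffun I -> {set I}}) : rel I := fun x y => x \in G y.

Definition dag_k (k : nat) (G : {ffun I -> {set I}}) : Prop :=
  (forall y, y \notin G y) /\ (forall y, #|G y| <= k)%N /\
  (forall x y, edge G x y -> ~~ connect (edge G) y x).

Definition adj (G : {ffun I -> {set I}}) (x y : I) : bool :=
  (x \in G y) || (y \in G x).

Definition vstruct (G : {ffun I -> {set I}}) (x z y : I) : bool :=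
  [&& x \in G z, y \in G z, x != y & ~~ adj G x y].

(* Markov equivalence (Verma--Pearl: same skeleton and same v-structures) *)
Definition markov_eq (G G' : {ffun I -> {set I}}) : Prop :=
  (forall x y, adj G x y = adj G' x y) /\
  (forall x z y, vstruct G x z y = vstruct G' x z y).
End DAG.

Definition score (R : realType) (Omega I : finType) (T : eqType)
  (p : Omega -> R) (X : I -> Omega -> T) (G : {ffun I -> {set I}}) : R :=
  - \sum_(y : I) cent p (X y) (jointRV X (G y)).

(* Main.v *)
Require Import Defs.
From HB Require Import structures.
From mathcomp Require Import all_boot all_order all_algebra.
From mathcomp Require Import all_classical all_reals all_analysis.
From mathcomp Require Import ring lra.
Set Implicit Arguments. Unset Strict Implicit.
Import Order.TTheory GRing.Theory Num.Theory.
Local Open Scope ring_scope.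

Section H.
Variables (R : realType) (Omega : finType) (p : Omega -> R).
Hypothesis p0 : forall w, 0 <= p w.
Hypothesis p1 : \sum_w p w = 1.

Lemma prob_ge0 E : 0 <= prob p E.
Proof. by apply: sumr_ge0 => w _. Qed.

Lemma prob_mkcond E : prob p E = \sum_w (if E w then p w else 0).
Proof. by rewrite /prob big_mkcond. Qed.

Lemma prob_sub (E1 E2 : pred Omega) : (forall w, E1 w -> E2 w) -> prob p E1 <= prob p E2.
Proof.
move=> H; rewrite !prob_mkcond; apply: ler_sum => w _.
by case: (boolP (E1 w)) => [/H -> //|_]; case: (E2 w).
Qed.

Lemma prob_ge (E : pred Omega) w : E w -> p w <= prob p E.
Proof.
move=> Ew; apply: le_trans (@prob_sub (pred1 w) E _).
  by rewrite /prob big_pred1_eq.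
by move=> u /eqP ->.
Qed.

Lemma ln_le_sub1 (x : R) : 0 < x -> ln x <= x - 1.
Proof.
move=> x0; have := expR_ge1Dx (ln x); rewrite lnK ?posrE //; lra.
Qed.

Lemma ent_mono (U V : eqType) (Z1 : Omega -> U) (Z2 : Omega -> V) :
  (forall w w', Z2 w' == Z2 w -> Z1 w' == Z1 w) -> ent p Z1 <= ent p Z2.
Proof.
move=> H; rewrite /ent lerN2; apply: ler_sum => w _.
have [pw0|pwpos] := eqVneq (p w) 0; first by rewrite pw0 !mul0r.
have pw : 0 < p w by rewrite lt_neqAle eq_sym pwpos p0.
apply: ler_wpM2l; first exact: p0.
have h2 : p w <= prob p (fun w' => Z2 w' == Z2 w) by apply: prob_ge.
have h1 : p w <= prob p (fun w' => Z1 w' == Z1 w) by apply: prob_ge.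
rewrite ler_ln ?posrE; first (by apply: prob_sub => u; exact: H);
  by apply: lt_le_trans pw _.
Qed.

Lemma ent_eqrel (U V : eqType) (Z1 : Omega -> U) (Z2 : Omega -> V) :
  (forall w w', (Z2 w' == Z2 w) = (Z1 w' == Z1 w)) -> ent p Z1 = ent p Z2.
Proof.
move=> H; apply/le_anti/andP; split; apply: ent_mono => w w'; by rewrite H.
Qed.


Section Sub.
Variables (U V W : eqType) (A : Omega -> U) (B : Omega -> V) (Z : Omega -> W).

Definition PABZ w := prob p (fun u => [&& A u == A w, B u == B w & Z u == Z w]).
Definition PAB w := prob p (fun u => (A u == A w) && (B u == B w)).
Definition PBZ w := prob p (fun u => (B u == B w) && (Z u == Z w)).
Definition PB w := prob p (fun u => B u == B w).

Lemma inner u v :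
  \sum_w (p w * ((if (A u == A w) && (B u == B w) then p u else 0) *
                 (if (B v == B w) && (Z v == Z w) then p v else 0))
          / (PABZ w * PB w))
  <= p u * p v * (if B v == B u then (PB u)^-1 else 0).
Proof.
case: ifP => HB.
  have /eqP Hvu := HB.
  pose E := fun w => [&& A w == A u, B w == B u & Z w == Z v].
  have hE : forall w, E w -> PABZ w = prob p E /\ PB w = PB u.
    move=> w /and3P[/eqP h1 /eqP h2 /eqP h3]; split.
      by apply: eq_bigl => x; rewrite /E h1 h2 h3.
    by apply: eq_bigl => x; rewrite h2.
  rewrite (eq_bigr (fun w => if E w then p u * p v * (p w / (prob p E * PB u)) else 0)); last first.
    move=> w _; rewrite Hvu.
    case: (boolP (E w)) => Ew.
      have [-> ->] := hE w Ew.
      move: Ew; rewrite /E => /and3P[/eqP h1 /eqP h2 /eqP h3].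
      rewrite h1 h2 h3 !eqxx /=; ring.
    move: Ew; rewrite /E [A w == _]eq_sym [B w == _]eq_sym [Z w == _]eq_sym.
    by case: (A u == A w); case: (B u == B w); case: (Z v == Z w) => //= _;
      rewrite ?mul0r ?mulr0 ?mul0r.
  rewrite -big_mkcond /= -mulr_sumr -mulr_suml.
  apply: ler_wpM2l; first by rewrite mulr_ge0.
  rewrite invfM mulrA.
  have hP := prob_ge0 E.
  have hB := prob_ge0 (fun x => B x == B u).
  rewrite -/(prob p E).
  have [->|nz] := eqVneq (prob p E) 0; first by rewrite mul0r mul0r invr_ge0.
  by rewrite mulfV // mul1r.
rewrite mulr0 big1 // => w _.
case: (boolP ((A u == A w) && (B u == B w))) => c1;
  case: (boolP ((B v == B w) && (Z v == Z w))) => c2;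
  rewrite ?mul0r ?mulr0 ?mul0r //.
move: c1 c2 => /andP[_ /eqP h1] /andP[/eqP h2 _].
by move: HB; rewrite h1 h2 eqxx.
Qed.

Lemma qsum : \sum_w p w * (PAB w * PBZ w / (PABZ w * PB w)) <= 1.
Proof.
rewrite (eq_bigr (fun w => \sum_u \sum_v (p w * ((if (A u == A w) && (B u == B w) then p u else 0) *
                 (if (B v == B w) && (Z v == Z w) then p v else 0))
          / (PABZ w * PB w)))); last first.
  move=> w _; rewrite /PAB /PBZ !prob_mkcond big_distrlr /= mulr_suml mulr_sumr.
  apply: eq_bigr => u _; rewrite mulr_suml mulr_sumr; apply: eq_bigr => v _.
  by rewrite mulrA.
rewrite exchange_big /=.
under eq_bigr => u _ do rewrite exchange_big /=.
apply: le_trans (_ : _ <= \sum_u \sum_v p u * p v * (if B v == B u then (PB u)^-1 else 0)) _.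
  apply: ler_sum => u _; apply: ler_sum => v _; exact: inner.
rewrite -p1; apply: ler_sum => u _.
rewrite (eq_bigr (fun v => p u * (PB u)^-1 * (if B v == B u then p v else 0))); last first.
  by move=> v _; case: ifP => _; rewrite ?mulr0 // mulrAC.
rewrite -mulr_sumr -(prob_mkcond (fun v => B v == B u)) -/(PB u) -mulrA.
have [->|nz] := eqVneq (PB u) 0; first by rewrite invr0 mul0r mulr0 p0.
by rewrite mulVf // mulr1.
Qed.

Lemma submod : ent p (pairRV (pairRV A B) Z) + ent p B <=
  ent p (pairRV A B) + ent p (pairRV B Z).
Proof.
have e1 : ent p (pairRV (pairRV A B) Z) = - \sum_w p w * ln (PABZ w).
  rewrite /ent; congr (- _); apply: eq_bigr => w _; congr (_ * ln _).
  by rewrite /PABZ /PAB /PBZ /prob; apply: eq_bigl => u; rewrite /pairRV !xpair_eqE andbA.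
have e2 : ent p (pairRV A B) = - \sum_w p w * ln (PAB w).
  rewrite /ent; congr (- _); apply: eq_bigr => w _; congr (_ * ln _).
have e3 : ent p (pairRV B Z) = - \sum_w p w * ln (PBZ w).
  rewrite /ent; congr (- _); apply: eq_bigr => w _; congr (_ * ln _).
have e4 : ent p B = - \sum_w p w * ln (PB w) by [].
rewrite e1 e2 e3 e4.
have key : \sum_w p w * (ln (PAB w) + ln (PBZ w) - ln (PABZ w) - ln (PB w)) <= 0.
  apply: le_trans (_ : _ <= \sum_w p w * (PAB w * PBZ w / (PABZ w * PB w) - 1)) _.
    apply: ler_sum => w _.
    have [pw0|pwpos] := eqVneq (p w) 0; first by rewrite pw0 !mul0r.
    have pw : 0 < p w by rewrite lt_neqAle eq_sym pwpos p0.
    have h1 : 0 < PABZ w by apply: (lt_le_trans pw); apply: prob_ge; rewrite !eqxx.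
    have h2 : 0 < PAB w by apply: (lt_le_trans pw); apply: prob_ge; rewrite !eqxx.
    have h3 : 0 < PBZ w by apply: (lt_le_trans pw); apply: prob_ge; rewrite !eqxx.
    have h4 : 0 < PB w by apply: (lt_le_trans pw); apply: prob_ge; rewrite !eqxx.
    apply: ler_wpM2l; first exact: p0.
    have hq : 0 < PAB w * PBZ w / (PABZ w * PB w) by rewrite divr_gt0 ?mulr_gt0.
    have := ln_le_sub1 hq.
    rewrite ln_div ?lnM ?posrE ?mulr_gt0 //; lra.
  under eq_bigr => w _ do rewrite mulrBr mulr1.
  rewrite sumrB p1; have := qsum; lra.
rewrite (eq_bigr (fun w => p w * ln (PAB w) + p w * ln (PBZ w) - p w * ln (PABZ w) - p w * ln (PB w))) in key; last first.
  by move=> w _; ring.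
rewrite !sumrB big_split /= in key; lra.
Qed.
End Sub.
Lemma key_ent (U V W : eqType) (A : Omega -> U) (B : Omega -> V) (Z : Omega -> W) :
  ent p (pairRV A Z) <= ent p (pairRV B Z) + cent p A B.
Proof.
have h1 : ent p (pairRV A Z) <= ent p (pairRV (pairRV A B) Z).
  by apply: ent_mono => w w'; rewrite /pairRV !xpair_eqE => /andP[/andP[-> _] ->].
have h2 := submod A B Z.
rewrite /cent; lra.
Qed.

Lemma diff_ent (U V W : eqType) (A : Omega -> U) (B : Omega -> V) (Z : Omega -> W) l :
  cent p A B <= l -> cent p B A <= l ->
  `|ent p (pairRV A Z) - ent p (pairRV B Z)| <= l.
Proof.
move=> hAB hBA; have h1 := key_ent A B Z; have h2 := key_ent B A Z.
rewrite ler_norml; apply/andP; split; lra.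
Qed.
End H.
Unset Implicit Arguments.
Set Strict Implicit.

Theorem lemma7 (R : realType) (k : nat) (Omega I : finType) (T : eqType)
  (p : Omega -> R) (X : I -> Omega -> T) (a : I) (Xb : Omega -> T)
  (alpha beta lambda : R) :
  (0 < k)%N ->
  (k <= #|I|)%N ->
  (forall w, 0 <= p w) -> \sum_w p w = 1 ->
  0 < alpha -> 0 < beta ->
  (exists Gs : {ffun I -> {set I}}, dag_k k Gs /\
     (forall G, dag_k k G -> ~ markov_eq G Gs ->
        score p X G <= score p X Gs - beta) /\
     (forall G, dag_k k G -> markov_eq G Gs -> forall y, a \notin G y)) ->
  cent p (X a) (jointRV X [set~ a]) = alpha ->
  0 < lambda -> lambda < Num.min alpha (beta / (3 * (#|I|.+1)%:R)) ->
  (exists C : Omega -> bool,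
     (forall (c : bool) (x : I -> T),
        prob p (fun w => (C w == c) && [forall i, X i w == x i])
        = prob p (fun w => C w == c) * prob p (fun w => [forall i, X i w == x i])) /\
     prob p (fun w => C w && (Xb w != X a w)) = 0 /\
     (forall (y : T) (x : I -> T),
        prob p (fun w => ~~ C w && (Xb w == y) && [forall i, X i w == x i])
          * prob p (fun w => ~~ C w)
        = prob p (fun w => ~~ C w && (Xb w == y))
          * prob p (fun w => ~~ C w && [forall i, X i w == x i]))) ->
  Num.max (cent p Xb (X a)) (cent p (X a) Xb) = lambda ->
  forall (Pi : {set I}) (Y : I),
    `|cent p Xb (jointRV X Pi) - cent p (X a) (jointRV X Pi)| <= lambda /\
    `|cent p (X Y) (pairRV (jointRV X Pi) Xb)
      - cent p (X Y) (pairRV (jointRV X Pi) (X a))| <= 3 * lambda.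
Proof.
move=> _ _ p0 p1 _ _ _ _ lam0 _ _ HV Pi Y.
have hba : cent p Xb (X a) <= lambda by rewrite -HV le_max lexx.
have hab : cent p (X a) Xb <= lambda by rewrite -HV le_max lexx orbT.
have D := fun (W : eqType) (Z : Omega -> W) => diff_ent p0 p1 Z hba hab.
split.
  have := D _ (jointRV X Pi); rewrite /cent.
  by have -> : forall x y z : R, x - z - (y - z) = x - y by move=> *; ring.
have e1 : forall (V : eqType) (B : Omega -> V),
    ent p (pairRV (jointRV X Pi) B) = ent p (pairRV B (jointRV X Pi)).
  move=> V B; apply: ent_eqrel => // w w'; rewrite /pairRV !xpair_eqE.
  by do ![case: (_ == _)].
have e2 : forall (V : eqType) (B : Omega -> V),
    ent p (pairRV (X Y) (pairRV (jointRV X Pi) B)) =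
    ent p (pairRV B (pairRV (X Y) (jointRV X Pi))).
  move=> V B; apply: ent_eqrel => // w w'; rewrite /pairRV !xpair_eqE.
  by do ![case: (_ == _)].
rewrite /cent !e1 !e2.
have := D _ (jointRV X Pi); have := D _ (pairRV (X Y) (jointRV X Pi)).
set a1 := ent p (pairRV Xb _); set a2 := ent p (pairRV (X a) _).
set b1 := ent p (pairRV Xb _); set b2 := ent p (pairRV (X a) _).
move=> h1 h2.
have := ler_normD (a1 - a2) (b2 - b1).
rewrite distrC in h2.
have -> : a1 - b1 - (a2 - b2) = a1 - a2 + (b2 - b1) by ring.
move=> h; apply: le_trans h _; lra.
Qed.
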